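(* Let $\mu>0$ and consider the parametric multistage setting of the context. Assume that the noises $\mathbf{W}_1,\dots,\mathbf{W}_T$ are independent with finite supports and that there exists a compact set $\mathcal{P}\subset\mathbb{P}$ such that, for all $t\in\{0,\dots,T-1\}$ and all $w\in\mathrm{Supp}(\mathbf{W}_{t+1})$, $\mathrm{dom}\,L_t(x,u,w,\cdot)\subset\mathcal{P}$ for all $(x,u)\in\mathbb{X}\times\mathbb{U}$, and $\mathrm{dom}\,K(x,\cdot)\subset\mathcal{P}$ for all $x\in\mathbb{X}$. Then: 1. for all $t\in\{0,\dots,T-1\}$ and all $w\in\mathrm{Supp}(\mathbf{W}_{t+1})$, if $L_t(\cdot,\cdot,w,\cdot)\in\Gamma_{\mathcal{K}}[\mathbb{X}\times\mathbb{U},\mathbb{P}]$, then $L^\mu_t(\cdot,\cdot,w,\cdot)\in\Theta_{\mathcal{K}}[\mathbb{X}\times\mathbb{U},\mathbb{P}]$; 2. if $K\in\Gamma[\mathbb{X},\mathbb{P}]$, then $K^\mu\in\Theta[\mathbb{X},\mathbb{P}]$.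
   Context: $T\ge1$; $\mathbb{X}=\mathbb{R}^{n_x}$, $\mathbb{U}=\mathbb{R}^{n_u}$, $\mathbb{W}=\mathbb{R}^{n_w}$, $\mathbb{P}=\mathbb{R}^{n_p}$; $\mathbf{W}_1,\dots,\mathbf{W}_T$ are $\mathbb{W}$-valued random variables, $\mathrm{Supp}$ denotes the set of values taken with positive probability; $L_t:\mathbb{X}\times\mathbb{U}\times\mathbb{W}\times\mathbb{P}\to\,]-\infty,+\infty]$ ($t=0,\dots,T-1$) and $K:\mathbb{X}\times\mathbb{P}\to\,]-\infty,+\infty]$ are given cost functions; $\mathrm{dom}\,g=\{g<+\infty\}$. Parametric Moreau envelopes: $L^\mu_t(x,u,w,p)=\inf_{p'\in\mathbb{P}}\big(L_t(x,u,w,p')+\frac{1}{2\mu}\|p-p'\|_2^2\big)$ and $K^\mu(x,p)=\inf_{p'\in\mathbb{P}}\big(K(x,p')+\frac{1}{2\mu}\|p-p'\|_2^2\big)$. Function classes: for a Euclidean space $\mathbb{Y}$, $\Gamma[\mathbb{Y},\mathbb{P}]$ is the set of lower semicontinuous convex functions $\mathbb{Y}\times\mathbb{P}\to\,]-\infty,+\infty]$. For $\mathcal{Q}\subset\mathbb{P}$, $\Theta[\mathbb{Y},\mathcal{Q}]$ is the set of $\theta\in\Gamma[\mathbb{Y},\mathbb{P}]$ with $\mathrm{dom}\,\theta=Y_\theta\times\mathcal{Q}$ for some (possibly empty) $Y_\theta\subset\mathbb{Y}$ and such that $\theta(y,\cdot)$ is differentiable on $\mathrm{int}\,\mathcal{Q}$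 for each $y\in Y_\theta$. $\Gamma_{\mathcal{K}}[\mathbb{X}\times\mathbb{U},\mathbb{P}]$ is the set of $\gamma\in\Gamma[\mathbb{X}\times\mathbb{U},\mathbb{P}]$ for which some compact $\mathcal{K}_\gamma\subset\mathbb{U}$ satisfies $\mathrm{dom}\,\gamma(x,\cdot,p)\subset\mathcal{K}_\gamma$ for all $(x,p)$; $\Theta_{\mathcal{K}}[\mathbb{X}\times\mathbb{U},\mathcal{Q}]=\Theta[\mathbb{X}\times\mathbb{U},\mathcal{Q}]\cap\Gamma_{\mathcal{K}}[\mathbb{X}\times\mathbb{U},\mathbb{P}]$. *)

(* Defs.v *)
From HB Require Import structures.
From mathcomp Require Import all_boot all_order all_algebra.
From mathcomp Require Import all_classical all_reals all_analysis.
Set Implicit Arguments. Unset Strict Implicit. Unset Printing Implicit Defensive.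
Import Order.TTheory GRing.Theory Num.Theory.
Import numFieldNormedType.Exports.
Local Open Scope classical_set_scope.
Local Open Scope ring_scope.

Section Defs.
Variable R : realType.

Definition sqnorm2 (n : nat) (v : 'rV[R]_n) : R := \sum_(i < n) (v ord0 i) ^+ 2.

Definition edom (T : Type) (g : T -> \bar R) : set T := [set z | (g z < +oo)%E].

Definition no_minfty (T : Type) (g : T -> \bar R) : Prop := forall z, g z <> -oo%E.

Definition elsc (T : topologicalType) (g : T -> \bar R) : Prop :=
  forall z (r : R), (r%:E < g z)%E -> \forall z' \near z, (r%:E < g z')%E.

Definition econvex (V : lmodType R) (g : V -> \bar R) : Prop :=
  forall (a b : V) (l : R), 0 < l < 1 ->
    (g (l *: a + (1 - l) *: b)%R <= l%:E * g a + (1 - l)%:E * g b)%E.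

Definition GammaF (Y P : normedModType R) (g : Y * P -> \bar R) : Prop :=
  no_minfty g /\ elsc g /\ econvex g.

Definition ThetaF (Y P : normedModType R) (Q : set P) (g : Y * P -> \bar R)
  : Prop :=
  GammaF g /\
  exists Yg : set Y, edom g = Yg `*` Q /\
    forall y, Yg y -> forall p, interior Q p ->
      differentiable (fun p' => fine (g (y, p'))) p.

Definition GammaKF (X U P : normedModType R) (g : (X * U) * P -> \bar R)
  : Prop :=
  GammaF g /\ exists KU : set U, compact KU /\
    forall x p, [set u | (g ((x, u), p) < +oo)%E] `<=` KU.

Definition ThetaKF (X U P : normedModType R) (Q : set P)
  (g : (X * U) * P -> \bar R) : Prop :=
  ThetaF Q g /\ GammaKF g.

Definition moreau (A : Type) (np : nat) (mu : R) (g : A -> 'rV[R]_np -> \bar R)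
  (a : A) (p : 'rV[R]_np) : \bar R :=
  ereal_inf (range (fun p' => (g a p' + ((2 * mu)^-1 * sqnorm2 (p - p'))%:E)%E)).

Definition supp (d : measure_display) (Om : measurableType d)
  (P : probability Om R) (V : Type) (Z : Om -> V) : set V :=
  [set w | (0 < P (Z @^-1` [set w]))%E].

End Defs.

(* Main.v *)
Require Import Defs.
From HB Require Import structures.
From mathcomp Require Import all_boot all_order all_algebra.
From mathcomp Require Import all_classical all_reals all_analysis.
From mathcomp Require Import ring lra.
Import Order.TTheory GRing.Theory Num.Theory.
Import numFieldNormedType.Exports.
Local Open Scope classical_set_scope.
Local Open Scope ring_scope.

Section Helpers.
Variable R : realType.

Lemma ereal_dense (x y : \bar R) : (x < y)%E -> exists r : R, (x < r%:E)%E /\ (r%:E < y)%E.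
Proof.
case: x => [x| |]; case: y => [y| |] //=.
- rewrite lte_fin => xy; exists ((x + y) / 2); rewrite !lte_fin; split; lra.
- move=> _; exists (x + 1); rewrite !lte_fin ltry; split => //; lra.
- move=> _; exists (y - 1); rewrite !lte_fin ltNyr; split => //; lra.
- move=> _; exists 0; by rewrite ltNyr ltry.
Qed.

Lemma elsc_comp (T U : topologicalType) (f : U -> \bar R) (h : T -> U) :
  elsc f -> continuous h -> elsc (f \o h).
Proof. move=> fl hc z r /fl H; exact: hc _ _ H. Qed.

Lemma elscD (T : topologicalType) (f : T -> \bar R) (k : T -> R) :
  elsc f -> continuous k -> elsc (fun z => f z + (k z)%:E)%E.
Proof.
move=> fl kc z r H.
have : ((r - k z)%:E < f z)%E by rewrite EFinB lteBlDr.
move=> /ereal_dense [s [h1 h2]].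
have H1 := fl z s h2.
have H2 : \forall z' \near z, r - s < k z'.
  apply: (cvgr_gt (k z)); first exact: kc.
  by move: h1; rewrite lte_fin; lra.
near=> z'.
have h3 : (s%:E < f z')%E by near: z'.
have h4 : r - s < k z' by near: z'.
rewrite -lteBlDr // -EFinB; apply: lt_trans h3; rewrite lte_fin; lra.
Unshelve. all: by end_near. Qed.

Definition dotr n (u v : 'rV[R]_n) : R := \sum_(i < n) u ord0 i * v ord0 i.

Arguments dotr {n}.

Lemma sqnorm2D n (u v : 'rV[R]_n) :
  sqnorm2 (u + v) = sqnorm2 u + 2 * dotr u v + sqnorm2 v.
Proof.
rewrite /sqnorm2 /dotr mulr_sumr -!big_split; apply: eq_bigr => i _ /=.
rewrite mxE; ring.
Qed.

Lemma sqnorm2N n (u : 'rV[R]_n) : sqnorm2 (- u) = sqnorm2 u.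
Proof. by rewrite /sqnorm2; apply: eq_bigr => i _; rewrite mxE sqrrN. Qed.

Lemma sqnorm2_ge0 n (u : 'rV[R]_n) : 0 <= sqnorm2 u.
Proof. by rewrite /sqnorm2 sumr_ge0 // => i _; rewrite sqr_ge0. Qed.

Lemma sqnorm2_cvx n (u v : 'rV[R]_n) (l : R) : 0 <= l <= 1 ->
  sqnorm2 (l *: u + (1 - l) *: v) <= l * sqnorm2 u + (1 - l) * sqnorm2 v.
Proof.
move=> /andP[l0 l1].
rewrite /sqnorm2 !mulr_sumr -big_split; apply: ler_sum => i _ /=.
rewrite !mxE.
have : 0 <= l * (1 - l) * (u ord0 i - v ord0 i) ^+ 2.
  by rewrite mulr_ge0 ?sqr_ge0 // mulr_ge0 // subr_ge0.
set x := u ord0 i; set y := v ord0 i.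
nra.
Qed.

Lemma sqnorm2_le n (h : 'rV[R]_n) : sqnorm2 h <= n%:R * `|h| ^+ 2.
Proof.
rewrite /sqnorm2.
have -> : n%:R * `|h| ^+ 2 = \sum_(i < n) `|h| ^+ 2.
  by rewrite sumr_const card_ord mulr_natl.
apply: ler_sum => i _.
rewrite -real_normK ?num_real //.
rewrite lerXn2r ?nnegrE //.
have -> : `|h| = mx_norm h by [].
rewrite mx_normrE.
exact: (le_bigmax _ _ (ord0, i)).
Qed.

Lemma sqnorm2_cont n : continuous (fun v : 'rV[R]_n => sqnorm2 v).
Proof.
rewrite /sqnorm2.
apply: continuous_big; first exact: add_continuous.
move=> i _ x.
apply: continuousM; exact: coord_continuous.
Qed.

End Helpers.
Arguments ereal_dense {R} [x y].
Arguments dotr {R n}.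
Arguments sqnorm2D {R n}.
Arguments sqnorm2N {R n}.
Arguments sqnorm2_ge0 {R n}.
Arguments sqnorm2_cvx {R n}.
Arguments sqnorm2_le {R n}.
Arguments sqnorm2_cont {R n}.

Lemma differentiable_of (R : realType) (V W : normedModType R) (f : V -> W)
  (df : {linear V -> W}) x :
  continuous df -> f \o shift x = cst (f x) + df +o_ 0 id ->
  differentiable f x.
Proof.
move=> dfc dxf.
have hdf h : (f \o shift x = cst (f x) + h +o_ 0 id) ->
    h = f \o shift x - cst (f x) +o_ 0 id.
  move=> hdf; apply: eqaddoE.
  rewrite hdf addrAC -!addrA addrC !addrA subrK.
  rewrite -[LHS]addr0 -addrA; congr (_ + _).
  by apply/eqP; rewrite eq_sym addrC addr_eq0 oppo.
apply/diffP => /=.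
apply: (@getPex _ (fun (df : {linear V -> W}) => continuous df /\
  forall y, f y = f (lim (nbhs x)) + df (y - lim (nbhs x))
                  +o_(y \near x) (y - lim (nbhs x)))).
exists df; split=> //; apply: eqaddoEx => z.
rewrite (hdf _ dxf) !addrA lim_id // /(_ \o _) /= subrK [f _ + _]addrC addrK.
rewrite -addrA -[LHS]addr0; congr (_ + _).
apply/eqP; rewrite eq_sym addrC addr_eq0 oppox; apply/eqP.
rewrite [in LHS]littleo_center0 (comp_centerK x id).
by rewrite -[- _ in RHS](comp_centerK x).
Qed.

Definition dotl (R : realType) n (u : 'rV[R]_n) (h : 'rV[R]_n) : R := dotr u h.
Arguments dotl {R n}.

Lemma dotl_linear (R : realType) n (u : 'rV[R]_n) : linear_for *:%R (dotl u).
Proof.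
move=> a x y; rewrite /dotl /dotr /= scaler_sumr -big_split; apply: eq_bigr => i _ /=.
rewrite !mxE -[a *: _]/(a * _); ring.
Qed.

HB.instance Definition _ (R : realType) n (u : 'rV[R]_n) :=
  GRing.isLinear.Build R 'rV[R]_n R *:%R (dotl u) (@dotl_linear R n u).

Lemma dotl_cont (R : realType) n (u : 'rV[R]_n) : continuous (dotl u).
Proof.
rewrite /dotl /dotr.
apply: continuous_big; first exact: add_continuous.
move=> i _ x.
apply: continuousM; [exact: cst_continuous | exact: coord_continuous].
Qed.

Lemma diff_bound (R : realType) n (f : 'rV[R]_n -> R) (p u : 'rV[R]_n) (C : R) :
  (forall h, `|f (h + p) - f p - dotr u h| <= C * `|h| ^+ 2) ->
  differentiable f p.
Proof.
move=> H; apply: (@differentiable_of _ _ _ f (dotl u) p (@dotl_cont _ _ u)).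
apply/eqaddoP => eps eps0.
have k0 : 0 < eps / (`|C| + 1) by rewrite divr_gt0 // ltr_wpDl.
near=> h.
have hh : `|h| < eps / (`|C| + 1).
  near: h; change (\forall x \near (0 : 'rV[R]_n), `|x| < eps / (`|C| + 1)); exact: (nbhs0_lt k0).
have -> : (f \o shift p - (cst (f p) + dotl u)) h = f (h + p) - f p - dotr u h.
  by rewrite /= opprD addrA.
apply: (le_trans (H h)) => /=.
move: hh; rewrite ltr_pdivlMr ?ltr_wpDl // => hh.
have x0 : 0 <= `|h| by [].
have Ck : C <= `|C| by exact: ler_norm.
set x := `|h| in hh x0 *; set k := `|C| in hh Ck *.
nra.
Unshelve. all: by end_near. Qed.

Section Moreau.
Variables (R : realType) (A : normedModType R) (n : nat) (mu : R).
Hypothesis mu_gt0 : 0 < mu.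
Variable g : A -> 'rV[R]_n -> \bar R.
Hypothesis gG : GammaF (fun z : A * 'rV[R]_n => g z.1 z.2).
Variable Pc : set 'rV[R]_n.
Hypothesis Pcc : compact Pc.
Hypothesis gdom : forall a, edom (g a) `<=` Pc.

Let c (v : 'rV[R]_n) : R := (2 * mu)^-1 * sqnorm2 v.
Let psi a p q : \bar R := (g a q + (c (p - q))%:E)%E.

Let c_cont : continuous c.
Proof.
have -> : c = (fun=> (2 * mu)^-1) \* (fun v => sqnorm2 v) by [].
move=> v; apply: continuousM; first exact: cst_continuous.
exact: sqnorm2_cont.
Qed.

Let gno a q : g a q != -oo%E.
Proof. by apply/eqP; have [H _] := gG; exact: (H (a, q)). Qed.

Let glsc : elsc (fun z : A * 'rV[R]_n => g z.1 z.2).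
Proof. by have [_ []] := gG. Qed.

Let gcvx : econvex (fun z : A * 'rV[R]_n => g z.1 z.2).
Proof. by have [_ []] := gG. Qed.

Let notPc_inf a q : ~ Pc q -> g a q = +oo%E.
Proof.
move=> nq; apply/eqP; rewrite -leye_eq leNgt; apply/negP => h.
by apply: nq; exact: (@gdom a q h).
Qed.

Let psi_lsc a p : elsc (psi a p).
Proof.
apply: (@elscD _ _ ((fun z : A * 'rV[R]_n => g z.1 z.2) \o (fun q => (a, q)))
   (fun q => c (p - q))).
  apply: elsc_comp => // q.
  apply: (@cvg_pair _ _ _ (nbhs q) (nbhs a) (nbhs q)); [exact: cvg_cst | exact: cvg_id].
move=> q.
have H : {for q, continuous (fun q : 'rV[R]_n => p - q)}.
  apply: (@cvgB _ _ _ (nbhs q) _ (fun=> p) id); [exact: cvg_cst | exact: cvg_id].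
exact: (@continuous_comp _ _ _ _ c q H (c_cont _)).
Qed.

Let Psi (w : 'rV[R]_n * (A * 'rV[R]_n)) : \bar R := psi w.2.1 w.2.2 w.1.

Let Psi_lsc : elsc Psi.
Proof.
apply: (@elscD _ _ ((fun z : A * 'rV[R]_n => g z.1 z.2) \o
   (fun w : 'rV[R]_n * (A * 'rV[R]_n) => (w.2.1, w.1)))
   (fun w => c (w.2.2 - w.1))).
  apply: elsc_comp => // w.
  apply: (@cvg_pair _ _ _ (nbhs w) (nbhs w.2.1) (nbhs w.1)).
    apply: (@continuous_comp _ _ _ snd fst); [exact: cvg_snd | exact: cvg_fst].
  exact: cvg_fst.
move=> w.
have H : {for w, continuous (fun w : 'rV[R]_n * (A * 'rV[R]_n) => w.2.2 - w.1)}.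
  apply: (@cvgB _ _ _ (nbhs w) _ (fun w : 'rV[R]_n * (A * 'rV[R]_n) => w.2.2) fst); last exact: cvg_fst.
  apply: (@continuous_comp _ _ _ snd snd); exact: cvg_snd.
exact: (@continuous_comp _ _ _ _ c w H (c_cont _)).
Qed.

Lemma moreau_le a p q : (moreau mu g a p <= psi a p q)%E.
Proof. by apply: ereal_inf_lbound; exists q. Qed.

Lemma moreau_pinfty a p : (forall q, g a q = +oo%E) -> moreau mu g a p = +oo%E.
Proof.
move=> H; apply/ereal_inf_pinfty => _ [q _ <-].
by rewrite /= H addye.
Qed.

Lemma moreau_min a p q0 : (g a q0 < +oo)%E ->
  exists q, moreau mu g a p = psi a p q /\ g a q \is a fin_num.
Proof.
move=> gq0.
set m := moreau mu g a p.
have mlt : (m < +oo)%E.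
  apply: (le_lt_trans (moreau_le a p q0)).
  by apply: lte_add_pinfty => //; rewrite ltry.
suff [q [Pq qm]] : exists q, Pc q /\ (psi a p q <= m)%E.
  have mq : m = psi a p q by apply/le_anti; rewrite qm moreau_le.
  exists q; split => //.
  rewrite fin_numE gno /=; apply/negP => /eqP gqoo.
  by move: mlt; rewrite mq /psi gqoo addye // ltxx.
apply: contrapT => Hn.
have H : forall q, Pc q -> (m < psi a p q)%E.
  move=> q Pq; rewrite ltNge; apply/negP => h; apply: Hn; by exists q.
pose F := filter_from [set r0 : R | (m < r0%:E)%E]
   (fun r0 => [set r : R | (m < r%:E)%E /\ r < r0]).
have FF : Filter F.
  apply: filter_from_filter.
    by have [r0 [h _]] := ereal_dense mlt; exists r0.
  move=> i j mi mj; case: (leP i j) => ij.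
    by exists i => // r [mr ri]; split; split => //; apply: lt_le_trans ij.
  by exists j => // r [mr rj]; split; split => //; apply: lt_trans ij.
have := (proj1 (compact_near_coveringP Pc) Pcc) R F (fun r q => (r%:E < psi a p q)%E) FF.
case.
  move=> q Pq.
  have [r0 [m_r0 r0_psi]] := ereal_dense (H q Pq).
  have N := @psi_lsc a p q r0 r0_psi.
  exists ([set q' | (r0%:E < psi a p q')%E], [set r : R | (m < r%:E)%E /\ r < r0]).
    by split => //; exists r0.
  by move=> [q' r] /= [h1 [_ h2]]; apply: lt_trans h1; rewrite lte_fin.
move=> r0 /= m_r0 sub.
have [r [mr rr0]] := ereal_dense m_r0.
have Hr := sub r (conj mr rr0).
have : (r%:E <= m)%E.
  apply: le_ereal_inf_tmp => _ [q _ <-].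
  have [Pq|nPq] := pselect (Pc q).
    exact: ltW (Hr q Pq).
  by rewrite /psi notPc_inf // addye // leey.
by rewrite leNgt mr.
Qed.
Lemma moreau_lsc : elsc (fun z : A * 'rV[R]_n => moreau mu g z.1 z.2).
Proof.
move=> z0 r H.
have [s [rs s_e]] := ereal_dense H.
have FF : Filter (nbhs z0) by exact: nbhs_filter.
have cov := (proj1 (compact_near_coveringP Pc) Pcc) (A * 'rV[R]_n)%type (nbhs z0)
   (fun z q => (s%:E < Psi (q, z))%E) FF.
have Hn : \forall z \near z0, Pc `<=` (fun q => (s%:E < Psi (q, z))%E).
  apply: cov => q Pq.
  have h : (s%:E < Psi (q, z0))%E.
    apply: (lt_le_trans s_e); exact: moreau_le.
  exact: (@Psi_lsc (q, z0) s h).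
apply: (filterS _ Hn) => z Hz.
apply: (lt_le_trans rs); apply: le_ereal_inf_tmp => _ [q _ <-].
have [Pq|nPq] := pselect (Pc q).
  exact: ltW (Hz q Pq).
by rewrite /= notPc_inf // addye // leey.
Qed.

Lemma moreau_nominfty a p : moreau mu g a p != -oo%E.
Proof.
have [[q0 hq0]|nq] := pselect (exists q0, (g a q0 < +oo)%E).
  have [q [-> fq]] := @moreau_min a p q0 hq0.
  rewrite /psi; move: fq; case: (g a q) => //.
rewrite moreau_pinfty // => q; apply/eqP; rewrite -leye_eq leNgt; apply/negP => h.
by apply: nq; exists q.
Qed.

Lemma moreau_lty a p : (moreau mu g a p < +oo)%E <-> exists q, (g a q < +oo)%E.
Proof.
split.
  move=> /ereal_inf_lt [_ [q _ <-]] /= h; exists q.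
  rewrite ltey; apply/eqP => gq; move: h; by rewrite gq addye // ltxx.
move=> [q hq]; apply: (le_lt_trans (moreau_le a p q)).
by apply: lte_add_pinfty => //; rewrite ltry.
Qed.

Lemma pos_mul_nominfty (l : R) (x : \bar R) : 0 < l -> x != -oo%E -> (l%:E * x)%E != -oo%E.
Proof.
move=> l0; case: x => [r| |] // _.
by rewrite muleC gt0_mulye // lte_fin.
Qed.

Lemma moreau_cvx : econvex (fun z : A * 'rV[R]_n => moreau mu g z.1 z.2).
Proof.
move=> [a1 p1] [a2 p2] l /andP[l0 l1] /=.
have l0' : 0 < 1 - l by rewrite subr_gt0.
have [[q1 h1]|n1] := pselect (exists q, (g a1 q < +oo)%E); last first.
  rewrite (@moreau_pinfty a1 p1); last first.
    move=> q; apply/eqP; rewrite -leye_eq leNgt; apply/negP => h.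
    by apply: n1; exists q.
  rewrite muleC gt0_mulye ?lte_fin // addye ?leey //.
  exact: pos_mul_nominfty (moreau_nominfty _ _).
have [[q2 h2]|n2] := pselect (exists q, (g a2 q < +oo)%E); last first.
  rewrite (@moreau_pinfty a2 p2); last first.
    move=> q; apply/eqP; rewrite -leye_eq leNgt; apply/negP => h.
    by apply: n2; exists q.
  rewrite [X in (_ + X)%E]muleC gt0_mulye ?lte_fin // addey ?leey //.
  exact: pos_mul_nominfty (moreau_nominfty _ _).
have [r1 [m1 f1]] := @moreau_min a1 p1 q1 h1.
have [r2 [m2 f2]] := @moreau_min a2 p2 q2 h2.
rewrite m1 m2.
set q := l *: r1 + (1 - l) *: r2.
apply: (le_trans (moreau_le _ _ q)).
have lc : 0 < l < 1 by rewrite l0 l1.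
have gc := gcvx (a1, r1) (a2, r2) l lc.
rewrite /psi -(fineK f1) -(fineK f2) in gc *.
rewrite -!EFinD.
set G1 := fine (g a1 r1) in gc *; set G2 := fine (g a2 r2) in gc *.
have -> : l *: p1 + (1 - l) *: p2 - q = l *: (p1 - r1) + (1 - l) *: (p2 - r2).
  by rewrite /q !scalerBr opprD !addrA; congr (_ - _); rewrite addrAC.
have lc' : 0 <= l <= 1 by rewrite (ltW l0) (ltW l1).
have cc := sqnorm2_cvx (p1 - r1) (p2 - r2) l lc'.
apply: (le_trans (leeD gc (lexx _))).
rewrite -!EFinD lee_fin.
rewrite /c.
have mu2 : 0 <= (2 * mu)^-1 by rewrite invr_ge0 mulr_ge0 // ltW.
have := ler_wpM2l mu2 cc.
set S1 := sqnorm2 (p1 - r1); set S2 := sqnorm2 (p2 - r2); set S := sqnorm2 _.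
move=> hh.
have e1 : (2 * mu)^-1 * (l * S1 + (1 - l) * S2) = l * ((2 * mu)^-1 * S1) + (1 - l) * ((2 * mu)^-1 * S2) by ring.
lra.
Qed.

Lemma moreau_fin a p : (exists q0, (g a q0 < +oo)%E) -> moreau mu g a p \is a fin_num.
Proof. by move=> h; rewrite fin_numE moreau_nominfty /= -ltey; apply/moreau_lty. Qed.

Lemma moreau_upper a p q h : moreau mu g a p = psi a p q -> g a q \is a fin_num ->
  fine (moreau mu g a (h + p)) <=
    fine (moreau mu g a p) + (dotr (mu^-1 *: (p - q)) h + c h).
Proof.
move=> mp fq.
have ex : exists q0, (g a q0 < +oo)%E.
  by exists q; rewrite ltey; move: fq; rewrite fin_numE => /andP[_ ->].
have f1 := @moreau_fin a (h + p) ex.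
rewrite -lee_fin (fineK f1) EFinD (fineK (@moreau_fin a p ex)) mp.
apply: (le_trans (moreau_le a (h + p) q)).
rewrite /psi -(fineK fq) -!EFinD lee_fin.
have -> : h + p - q = (p - q) + h by rewrite [h + p]addrC addrAC.
rewrite /c sqnorm2D.
have -> : dotr (mu^-1 *: (p - q)) h = mu^-1 * dotr (p - q) h.
  by rewrite /dotr mulr_sumr; apply: eq_bigr => i _; rewrite mxE mulrA.
have mu0 : mu != 0 by rewrite gt_eqF.
rewrite le_eqVlt; apply/orP; left; apply/eqP; field.
all: by [].
Qed.

Lemma moreau_diff a : (exists q0, (g a q0 < +oo)%E) -> forall p,
  differentiable (fun p' => fine (moreau mu g a p')) p.
Proof.
move=> ex p.
have [q0 hq0] := ex.
have [q [mp fq]] := @moreau_min a p q0 hq0.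
set f := fun p' => fine (moreau mu g a p').
apply: (@diff_bound _ _ f p (mu^-1 *: (p - q)) ((2 * mu)^-1 * n%:R)) => h.
have up1 := @moreau_upper a p q h mp fq.
have up2 := @moreau_upper a p q (- h) mp fq.
have mid : f p <= 2^-1 * f (h + p) + (1 - 2^-1) * f (- h + p).
  have lc : 0 < (2^-1 : R) < 1 by apply/andP; split; lra.
  have cv := moreau_cvx (a, h + p) (a, - h + p) (2^-1) lc.
  rewrite /= in cv.
  have Ea : 2^-1 *: a + (1 - 2^-1) *: a = a by rewrite -scalerDl addrC subrK scale1r.
  have Ep : 2^-1 *: (h + p) + (1 - 2^-1) *: (- h + p) = p.
    by apply/rowP => i; rewrite !mxE; field.
  rewrite Ea Ep in cv.
  rewrite /f -lee_fin (fineK (@moreau_fin a p ex)).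
  rewrite EFinD !EFinM (fineK (@moreau_fin a _ ex)) (fineK (@moreau_fin a _ ex)).
  exact: cv.
have dN : dotr (mu^-1 *: (p - q)) (- h) = - dotr (mu^-1 *: (p - q)) h.
  by rewrite /dotr -sumrN; apply: eq_bigr => i _; rewrite !mxE mulrN.
have cN : c (- h) = c h by rewrite /c sqnorm2N.
rewrite dN cN in up2.
have cb : c h <= (2 * mu)^-1 * n%:R * `|h| ^+ 2.
  rewrite /c -mulrA; apply: ler_wpM2l; last exact: sqnorm2_le.
  by rewrite invr_ge0 mulr_ge0 // ltW.
move: up1 up2 mid cb.
rewrite -/(f (h + p)) -/(f (- h + p)) -/(f p).
set D := dotr _ h; set ch := c h; set B := _ * `|h| ^+ 2.
move=> up1 up2 mid cb.
rewrite ler_norml; apply/andP; split; lra.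
Qed.

Lemma moreau_GammaF : GammaF (fun z : A * 'rV[R]_n => moreau mu g z.1 z.2).
Proof.
split; first by move=> z; apply/eqP; exact: moreau_nominfty.
split; [exact: moreau_lsc | exact: moreau_cvx].
Qed.

Lemma moreau_ThetaF : ThetaF setT (fun z : A * 'rV[R]_n => moreau mu g z.1 z.2).
Proof.
split; first exact: moreau_GammaF.
exists [set a | exists q, (g a q < +oo)%E]; split.
  apply/seteqP; split => -[a p] /=; rewrite /edom /=.
    by move=> /moreau_lty h; split.
  by move=> [h _]; apply/moreau_lty.
move=> a ha p _; exact: moreau_diff.
Qed.

End Moreau.

Theorem lemma1 (R : realType) (T nx nu nw np : nat) (mu : R)
  (d : measure_display) (Om : measurableType d) (P : probability Om R)
  (W : nat -> Om -> 'rV[R]_nw)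
  (L : nat -> 'rV[R]_nx -> 'rV[R]_nu -> 'rV[R]_nw -> 'rV[R]_np -> \bar R)
  (K : 'rV[R]_nx -> 'rV[R]_np -> \bar R) :
  (1 <= T)%N ->
  0 < mu ->
  (* W_1, ..., W_T are random variables with finite supports *)
  (forall t, (1 <= t <= T)%N -> forall w, measurable (W t @^-1` [set w])) ->
  (forall t, (1 <= t <= T)%N -> finite_set (supp P (W t))) ->
  (forall t, (1 <= t <= T)%N -> P (W t @^-1` supp P (W t)) = 1%E) ->
  (* W_1, ..., W_T are independent *)
  (forall a : nat -> 'rV[R]_nw,
     P [set om | forall t, (1 <= t <= T)%N -> W t om = a t] =
     (\prod_(1 <= t < T.+1) P (W t @^-1` [set a t]))%E) ->
  (* compactness of the parameter domains *)
  (exists Pc : set 'rV[R]_np, compact Pc /\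
     (forall t, (t < T)%N -> forall w, supp P (W t.+1) w ->
        forall x u, edom (L t x u w) `<=` Pc) /\
     (forall x, edom (K x) `<=` Pc)) ->
  (forall t, (t < T)%N -> forall w, supp P (W t.+1) w ->
     GammaKF (fun z : ('rV[R]_nx * 'rV[R]_nu) * 'rV[R]_np =>
                L t z.1.1 z.1.2 w z.2) ->
     ThetaKF setT (fun z : ('rV[R]_nx * 'rV[R]_nu) * 'rV[R]_np =>
                moreau mu (fun xu p' => L t xu.1 xu.2 w p') z.1 z.2)) /\
  (GammaF (fun z : 'rV[R]_nx * 'rV[R]_np => K z.1 z.2) ->
   ThetaF setT (fun z : 'rV[R]_nx * 'rV[R]_np => moreau mu K z.1 z.2)).
Proof.
move=> _ mu0 _ _ _ _ [Pc [Pcc [HL HK]]].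
split.
  move=> t tT w sw [gG [KU [KUc KUsub]]].
  have gdom : forall a : 'rV[R]_nx * 'rV[R]_nu,
      edom ((fun xu p' => L t xu.1 xu.2 w p') a) `<=` Pc.
    by move=> a; exact: (HL t tT w sw a.1 a.2).
  split.
    exact: (@moreau_ThetaF R _ np mu mu0 (fun xu p' => L t xu.1 xu.2 w p') gG Pc Pcc gdom).
  split.
    exact: (@moreau_GammaF R _ np mu mu0 (fun xu p' => L t xu.1 xu.2 w p') gG Pc Pcc gdom).
  exists KU; split => // x p u /= hu.
  have [q hq] := (proj1 (@moreau_lty R _ np mu (fun xu p' => L t xu.1 xu.2 w p') (x, u) p)) hu.
  exact: (KUsub x q u hq).
move=> KG.
have gdom : forall a, edom (K a) `<=` Pc by [].
exact: (@moreau_ThetaF R _ np mu mu0 K KG Pc Pcc gdom).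
Qed.
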